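(* Let $\alpha>1$ and $n\ge1$. For $k\in[n]$ let $X_{k,n}$ be the $k$-th order statistic of $n$ i.i.d. random variables from the Pareto distribution $\mathcal{P}_\alpha$, and $Y_{k,n}$ the $k$-th order statistic of $n$ i.i.d. random variables from the Fréchet distribution $\mathcal{F}_\alpha$. Then $\mathbb{E}[Y_{k,n}]\le\mathbb{E}[X_{k,n}]+1$.
   Context: Pareto $\mathcal{P}_\alpha$: CDF $1-x^{-\alpha}$ for $x\ge1$; Fréchet $\mathcal{F}_\alpha$: CDF $e^{-1/x^\alpha}$ for $x\ge0$. The $k$-th order statistic is the $k$-th smallest value (same convention for both samples). *)

(* Defs.v *)
From HB Require Import structures.
From mathcomp Require Import all_boot all_order all_algebra.
From mathcomp Require Import all_classical all_reals all_analysis.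
Set Implicit Arguments. Unset Strict Implicit. Unset Printing Implicit Defensive.
Import Order.TTheory GRing.Theory Num.Theory.
Local Open Scope classical_set_scope.
Local Open Scope ring_scope.

Definition pareto_cdf {R : realType} (alpha x : R) : R :=
  if 1 <= x then 1 - x `^ (- alpha) else 0.

Definition frechet_cdf {R : realType} (alpha x : R) : R :=
  if 0 < x then expR (- x `^ (- alpha)) else 0.

Definition has_cdf {d} {T : measurableType d} {R : realType}
  (P : probability T R) (X : T -> R) (F : R -> R) : Prop :=
  measurable_fun setT X /\
  forall x : R, P (X @^-1` `]-oo, x]) = (F x)%:E.

Definition mutually_independent {d} {T : measurableType d} {R : realType}
  (P : probability T R) (n : nat) (X : 'I_n -> T -> R) : Prop :=
  forall B : 'I_n -> set R, (forall i, measurable (B i)) ->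
    P (\bigcap_(i in [set: 'I_n]) (X i @^-1` B i)) =
    (\prod_(i < n) P (X i @^-1` B i))%E.

Definition iid_with_cdf {d} {T : measurableType d} {R : realType}
  (P : probability T R) (n : nat) (X : 'I_n -> T -> R) (F : R -> R) : Prop :=
  mutually_independent P X /\ forall i, has_cdf P (X i) F.

Definition order_stat {T : Type} {R : realType} (n k : nat)
  (X : 'I_n -> T -> R) : T -> R :=
  fun w => nth 0 (sort <=%R [seq X i w | i <- enum 'I_n]) k.-1.

(* Main.v *)
Require Import Defs.
From HB Require Import structures.
From mathcomp Require Import all_boot all_order all_algebra.
From mathcomp Require Import all_classical all_reals all_analysis.
From mathcomp Require Import measurable_realfun ring lra.
Import Order.TTheory GRing.Theory Num.Theory.
Local Open Scope ring_scope.
Section G.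
Variable R : realFieldType.
Variable n k : nat.

Definition Wp (p : 'I_n -> R) (S : {set 'I_n}) : R :=
  \prod_(i < n) (if i \in S then p i else 1 - p i).

Definition Gp (p : 'I_n -> R) : R :=
  \sum_(S : {set 'I_n} | (k <= #|S|)%N) Wp p S.

Lemma sum_split_set (j : 'I_n) (F : {set 'I_n} -> R) :
  \sum_(S : {set 'I_n}) F S = \sum_(S : {set 'I_n} | j \in S) (F S + F (S :\ j)).
Proof.
rewrite [LHS](bigID (fun S : {set 'I_n} => j \in S)) /= big_split /=; congr (_ + _).
rewrite (reindex_onto (fun S => S :\ j) (fun S => j |: S)) /=; last first.
  by move=> S jS; rewrite finset.setU1K.
apply: eq_bigl => S; rewrite !inE eqxx /=.
apply/eqP/idP => [<-|jS]; first by rewrite !inE eqxx.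
by rewrite finset.setD1K.
Qed.

Lemma mono_coord (p1 p2 : 'I_n -> R) (j : 'I_n) :
  (forall i, 0 <= p1 i <= 1) -> (forall i, 0 <= p2 i <= 1) ->
  (forall i, i != j -> p1 i = p2 i) -> p1 j <= p2 j -> Gp p1 <= Gp p2.
Proof.
move=> h1 h2 e12 le12.
rewrite /Gp [in X in X <= _]big_mkcond [in X in _ <= X]big_mkcond /=.
rewrite !(sum_split_set j); apply: ler_sum => S jS.
pose Rest (p : 'I_n -> R) := \prod_(i < n | i != j) (if i \in S then p i else 1 - p i).
have WS p : Wp p S = p j * Rest p by rewrite /Wp (bigD1 j) //= jS.
have WSj p : Wp p (S :\ j) = (1 - p j) * Rest p.
  rewrite /Wp (bigD1 j) //= !inE eqxx /=; congr (_ * _).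
  by apply: eq_bigr => i ij; rewrite !inE ij.
have eR : Rest p1 = Rest p2 by apply: eq_bigr => i ij; rewrite e12.
have R0 : 0 <= Rest p2.
  apply: prodr_ge0 => i _; case: ifP => _; have := h2 i; case/andP => ? ?; lra.
have cS : #|S| = (#|S :\ j|).+1 by rewrite (cardsD1 j S) jS.
rewrite !WS !WSj eR cS.
case: (leqP k #|S :\ j|) => c1.
  rewrite (leq_trans c1 (leqnSn _)); nra.
case: (leqP k (#|S :\ j|).+1) => c2; nra.
Qed.

Lemma Gp_mono (p q : R) : 0 <= p -> p <= q -> q <= 1 ->
  Gp (fun _ => p) <= Gp (fun _ => q).
Proof.
move=> p0 pq q1.
pose r (m : nat) := fun i : 'I_n => if (i < m)%N then q else p.
have r0 : r 0%N = (fun _ => p) by [].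
suff H m : (m <= n)%N -> Gp (r 0%N) <= Gp (r m).
  have := H n (leqnn n); rewrite r0.
  have -> // : Gp (r n) = Gp (fun _ => q).
  by apply: eq_bigr => S _; apply: eq_bigr => i _; rewrite /r ltn_ord.
elim: m => [|m IH] mn //.
apply: (le_trans (IH (ltnW mn))).
apply: (@mono_coord _ _ (Ordinal mn)).
- by move=> i; rewrite /r; case: ifP => _; apply/andP; split; lra.
- by move=> i; rewrite /r; case: ifP => _; apply/andP; split; lra.
- move=> i ij; rewrite /r [in RHS]ltnS [in RHS]leq_eqVlt.
  have e : (nat_of_ord i == m) = false.
    by apply/negbTE; apply: contra ij => /eqP ie; apply/eqP/val_inj.
  by rewrite e.
- rewrite /r /=.
  have -> : (m < m)%N = false by exact: ltnn.
  by have -> : (m < m.+1)%N = true by exact: ltnSn.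
Qed.

Lemma Gp0 : (0 < k)%N -> Gp (fun _ => 0) = 0.
Proof.
move=> k0; apply: big1 => S kS.
have : (0 < #|S|)%N by apply: leq_trans kS.
rewrite card_gt0 => /set0Pn[i iS].
by rewrite /Wp (bigD1 i) //= iS mul0r.
Qed.
End G.
Lemma sorted_nth_le (R : realDomainType) (l : seq R) k t : sorted <=%R l ->
  (0 < k <= size l)%N -> (nth 0 l k.-1 <= t) = (k <= count (fun x : R => (x <= t)%R) l)%N.
Proof.
elim: l k => [|x l IH] k //=; first by case: k => [|k]; rewrite ?ltnn /= ?andbF.
move=> pl /andP[k0 kl].
have al : all (fun y => x <= y) l by exact: (order_path_min le_trans pl).
have sl : sorted <=%R l by exact: (path_sorted pl).
case: (leP x t) => xt.
  case: k k0 kl => [//|[|k]] _ kl /=; first by rewrite xt.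
  rewrite add1n ltnS -IH //.
have -> : count (fun x0 : R => (x0 <= t)%R) l = 0%N.
  apply/eqP; rewrite -leqn0 leqNgt -has_count; apply/hasPn => y yl.
  by rewrite -ltNge (lt_le_trans xt) //; move/allP: al; apply.
rewrite add0n leqNgt k0 /=; apply/negbTE; rewrite -ltNge.
case: k k0 kl => [//|[|k]] _ kl /=; first by [].
apply: (lt_le_trans xt); move/allP: al; apply; apply: mem_nth.
by rewrite -ltnS.
Qed.
Lemma cnt (n : nat) (P : pred 'I_n) : count P (enum 'I_n) = #|[set i | P i]|.
Proof. rewrite cardE /enum_mem size_filter count_filter. apply: eq_count => i. by rewrite !inE andbT. Qed.

Lemma ostat_le (T : Type) (R : realType) n k (X : 'I_n -> T -> R) w t :
  (0 < k <= n)%N -> (order_stat k X w <= t) = (k <= #|[set i | (X i w <= t)%R]|)%N.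
Proof.
move=> kn; rewrite /order_stat sorted_nth_le.
- move/permP: (permEl (perm_sort <=%R [seq X i w | i <- enum 'I_n])) => ->.
  by rewrite count_map cnt.
- by apply: sort_sorted; exact: le_total.
- by rewrite size_sort size_map size_enum_ord.
Qed.

Local Open Scope classical_set_scope.

Arguments Wp {R n}.
Arguments Gp {R n}.
Section prob.
Context d (T : measurableType d) (R : realType) (P : probability T R).
Context (n k : nat) (X : 'I_n -> T -> R) (F : R -> R).
Hypothesis indep : mutually_independent P X.
Hypothesis cdfX : forall i, has_cdf P (X i) F.

Let mpre i (Y : set R) : measurable Y -> measurable (X i @^-1` Y).
Proof. by move=> mY; rewrite -[X i @^-1` _]setTI; exact: (cdfX i).1. Qed.

Definition Bs (S : {set 'I_n}) (t : R) i : set R :=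
  if i \in S then `]-oo, t]%classic else `]t, +oo[%classic.
Definition As S t := \bigcap_(i in [set: 'I_n]) (X i @^-1` Bs S t i).

Let mBs S t i : measurable (Bs S t i).
Proof. by rewrite /Bs; case: ifP => _; exact: measurable_itv. Qed.

Let mAs S t : measurable (As S t).
Proof. by apply: fin_bigcap_measurable; [exact: finite_finset| move=> i _; exact: mpre]. Qed.

Lemma PAs S t : P (As S t) = (Wp (fun _ => F t) S)%:E.
Proof.
rewrite /As indep //; rewrite /Wp -prodEFin; apply: eq_bigr => i _; rewrite /Bs.
case: ifP => _; first exact: (cdfX i).2.
have -> : X i @^-1` `]t, +oo[ = ~` (X i @^-1` `]-oo, t]).
  by apply/seteqP; split => w /=; rewrite !in_itv /= andbT ltNge => /negP.
rewrite probability_setC; last exact: mpre.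
have -> : P (X i @^-1` `]-oo, t]) = (F t)%:E by exact: (cdfX i).2.
by rewrite EFinB.
Qed.

Lemma inAs w S t : As S t w <-> S = [set i | (X i w <= t)%R]%SET.
Proof.
split.
  move=> H; apply/setP => i; rewrite inE; have := H i I; rewrite /Bs.
  by case: ifP => iS /=; rewrite in_itv /= ?andbT => h; [rewrite h | rewrite leNgt h].
move=> -> i _ /=; rewrite /Bs inE; case: ifP => h /=; first by rewrite in_itv /= h. by rewrite in_itv /= andbT ltNge h. Qed.



Definition Ev t := [set w | (k <= #|[set i | (X i w <= t)%R]%SET|)%N].

Lemma mEv t : measurable (Ev t).
Proof.
have -> : Ev t = \bigcup_(S in [set S : {set 'I_n} | (k <= #|S|)%N]) As S t.
  apply/seteqP; split => w /=.
    move=> h; exists [set i | (X i w <= t)%R]%SET => //; exact/inAs.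
  by move=> [S /= kS /inAs eS]; move: kS; rewrite eS.
by apply: fin_bigcup_measurable; [exact: finite_finset| move=> S _; exact: mAs].
Qed.

Lemma PEv t : P (Ev t) = (Gp k (fun _ : 'I_n => F t))%:E.
Proof.
have eq w : ((\1_(Ev t) w : R)%:E =
    \sum_(S : {set 'I_n}) (if (k <= #|S|)%N then (\1_(As S t) w : R)%:E else 0))%E.
  rewrite (bigD1 [set i | (X i w <= t)%R]%SET) //= big1 ?adde0; last first.
    move=> S nS; case: ifP => _ //; rewrite indicE memNset //.
    by move/inAs => eS; rewrite eS eqxx in nS.
  have hA : As [set i | (X i w <= t)%R]%SET t w by exact/inAs.
  rewrite !indicE (mem_set hA).
  case: ifP => h; [by rewrite mem_set | rewrite memNset //]; by rewrite /Ev /= h.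
rewrite -(setIT (Ev t)) -integral_indic //; last exact: mEv.
transitivity (\int[P]_(w in setT)
    (\sum_(S : {set 'I_n}) (if (k <= #|S|)%N then (\1_(As S t) w : R)%:E else 0)))%E.
  by apply: eq_integral => w _; exact: eq.
rewrite ge0_integral_sum //; last 2 first.
- move=> S; case: (k <= #|S|)%N; last exact: measurable_cst.
  by apply/measurable_EFinP; exact: measurable_indic.
- by move=> S w _; case: (k <= #|S|)%N => //; rewrite lee_fin.
rewrite /Gp -sumEFin [in RHS]big_mkcond /=; apply: eq_bigr => S _.
case: (k <= #|S|)%N; last by rewrite integral0.
rewrite integral_indic // setIT; exact: PAs.
Qed.

Hypothesis kn : (0 < k <= n)%N.

Lemma Zpre t : order_stat k X @^-1` `]-oo, t] = Ev t.
Proof. by apply/seteqP; split => w /=; rewrite in_itv /= ostat_le. Qed.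

Lemma mZ : measurable_fun setT (order_stat k X).
Proof.
apply: (measurability _ (RGenOInfty.measurableE R)) => // _ [_ [x ->] <-].
rewrite setTI.
have -> : order_stat k X @^-1` `]x, +oo[ = ~` Ev x.
  apply/seteqP; split => w /=; rewrite in_itv /= andbT.
    by move=> h; rewrite /Ev /= -ostat_le // leNgt h.
  by move=> h; rewrite ltNge ostat_le //; apply/negP.
exact/measurableC/mEv.
Qed.

Definition Zp := fun w => Num.max (order_stat k X w) 0.

Lemma mZp : measurable_fun setT Zp.
Proof. by apply: (eq_measurable_fun (order_stat k X \max cst 0)) => //; apply: measurable_maxr; [exact: mZ | exact: measurable_cst]. Qed.

Definition ZpRV : {RV P >-> R} := mfun_Sub (mem_set mZp : Zp \in mfun).

Lemma ccdfZp r : 0 <= r -> ccdf ZpRV r = (1 - Gp k (fun _ : 'I_n => F r))%:E.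
Proof.
move=> r0; rewrite /ccdf /distribution /pushforward /=.
have -> : ZpRV @^-1` `]r, +oo[ = ~` Ev r.
  apply/seteqP; split => w /=; rewrite in_itv /= andbT /Zp lt_max (ltNge r 0) r0 orbF.
    by move=> h; rewrite /Ev /= -ostat_le // leNgt h.
  by move=> h; rewrite ltNge ostat_le //; apply/negP.
by rewrite probability_setC ?PEv ?EFinB //; exact: mEv.
Qed.

Lemma E_ccdf : F 0 = 0 ->
  ('E_P[order_stat k X] = \int[lebesgue_measure]_(r in `[0%R, +oo[) ccdf ZpRV r)%E.
Proof.
move=> F0.
rewrite -ge0_expectation_ccdf; last by move=> w; rewrite /= /Zp le_max lexx orbT.
rewrite !unlock; apply: ae_eq_integral => //.
- by apply/measurable_EFinP; exact: mZ.
- by apply/measurable_EFinP; exact: mZp.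
exists (Ev 0); split; first exact: mEv.
  by apply: (eq_trans (PEv 0)); rewrite F0 Gp0 //; case/andP: kn.
move=> w /= h; rewrite /Ev /= -ostat_le // leNgt; apply/negP => Zpos.
by apply: h => _; rewrite /Zp /= max_l // ltW.
Qed.

End prob.

Lemma cdf_bounds d (T : measurableType d) (R : realType) (P : probability T R)
  (Z : T -> R) F r : has_cdf P Z F -> 0 <= F r <= 1.
Proof.
move=> [mZ h]; have m : measurable (Z @^-1` `]-oo, r]).
  by rewrite -[_ @^-1` _]setTI; exact: mZ.
by apply/andP; split; rewrite -lee_fin -h; [exact: measure_ge0 | exact: probability_le1].
Qed.

Theorem lemma18 (R : realType) (alpha : R) (n k : nat)
  (d1 : measure_display) (T1 : measurableType d1) (P1 : probability T1 R)
  (X : 'I_n -> T1 -> R)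
  (d2 : measure_display) (T2 : measurableType d2) (P2 : probability T2 R)
  (Y : 'I_n -> T2 -> R) :
  1 < alpha -> (1 <= n)%N -> (1 <= k <= n)%N ->
  iid_with_cdf P1 X (pareto_cdf alpha) ->
  iid_with_cdf P2 Y (frechet_cdf alpha) ->
  ('E_P2[order_stat k Y] <= 'E_P1[order_stat k X] + 1%:E)%E.
Proof.
move=> _ n1 kn [iX cX] [iY cY].
have F0X : pareto_cdf alpha 0 = 0 by rewrite /pareto_cdf ler10.
have F0Y : frechet_cdf alpha 0 = 0 by rewrite /frechet_cdf ltxx.
rewrite (@E_ccdf _ _ _ P1 n k X _ iX cX kn F0X) (@E_ccdf _ _ _ P2 n k Y _ iY cY kn F0Y).
set i0 : 'I_n := Ordinal n1.
have bX r := @cdf_bounds _ _ _ _ _ _ r (cX i0).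
have bY r := @cdf_bounds _ _ _ _ _ _ r (cY i0).
rewrite -[W in (W <= _)%E]adde0; apply: leeD; last by rewrite lee_fin.
apply: ge0_le_integral => //.
- by apply: measurable_funTS; exact: ccdf_measurable.
- by apply: measurable_funTS; exact: ccdf_measurable.
move=> r; rewrite /= in_itv /= andbT => r0.
rewrite !ccdfZp // lee_fin lerD2l lerN2.
apply: Gp_mono; [by case/andP: (bX r) | | by case/andP: (bY r)].
rewrite /pareto_cdf; case: ifP => h1; last by case/andP: (bY r).
rewrite /frechet_cdf (lt_le_trans ltr01 h1).
have := expR_ge1Dx (- r `^ (- alpha)); lra.
Qed.
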